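(* There exist absolute constants $\lambda_0>0$ and $C>0$ such that the following holds for every $0<\lambda\le\lambda_0$. Let $F$ be a bipartite graph with parts $V_0,V_1$, each of size $I$, such that $d_F(v)\ge(1-\lambda)I$ for every $v\in V_0\cup V_1$. Then there exists a probability distribution on perfect matchings $M$ of $F$ (viewed as sets of edges) which is $C/I$-spread, i.e. for every set $T$ of edges of $F$, $\mathbb{P}(M\supseteq T)\le (C/I)^{|T|}$.
   Context: A random set $S$ is $p$-spread if for all sets $T$, $\mathbb{P}(S\supseteq T)\le p^{|T|}$. $d_F(v)$ denotes the degree of $v$ in $F$. *)

(* Defs.v *)
From HB Require Import structures.
From mathcomp Require Import all_boot all_order all_algebra.
From Stdlib Require Import Rdefinitions.
From mathcomp Require Import reals Rstruct.
Set Implicit Arguments. Unset Strict Implicit. Unset Printing Implicit Defensive.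
Import Order.TTheory GRing.Theory Num.Theory.
Local Open Scope ring_scope.

(* A bipartite graph with parts V0 = 'I_I and V1 = 'I_I is given by its edge
   set F : {set 'I_I * 'I_I}; an edge (u, w) joins u \in V0 with w \in V1. *)
Definition edge_set (I : nat) := {set 'I_I * 'I_I}.

Definition deg0 (I : nat) (F : edge_set I) (u : 'I_I) : nat :=
  #|[set e in F | e.1 == u]|.
Definition deg1 (I : nat) (F : edge_set I) (w : 'I_I) : nat :=
  #|[set e in F | e.2 == w]|.

Definition perfect_matching (I : nat) (F M : edge_set I) : Prop :=
  M \subset F /\ (forall u, deg0 M u = 1%N) /\ (forall w, deg1 M w = 1%N).

Definition pm_distribution (I : nat) (F : edge_set I)
    (mu : {ffun edge_set I -> R}) : Prop :=
  (forall M, 0 <= mu M)%R /\ (\sum_M mu M = 1)%R /\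
  (forall M, mu M <> 0%R -> perfect_matching F M).

Definition spread (I : nat) (F : edge_set I) (mu : {ffun edge_set I -> R})
    (p : R) : Prop :=
  forall T : edge_set I, T \subset F ->
    (\sum_(M : edge_set I | T \subset M) mu M <= p ^+ #|T|)%R.

(* Main.v *)
From Stdlib Require Import Reals Lra.
Open Scope R_scope.
Lemma exp_pow_R (x : R) (n : nat) : exp x ^ n = exp (INR n * x).
Proof.
induction n as [|n IH].
  simpl; replace (0 * x) with 0 by ring; now rewrite exp_0.
rewrite <- tech_pow_Rmult, IH, S_INR, <- exp_plus; f_equal; ring.
Qed.

Lemma succ_pow_R (u : nat) : (0 < u)%nat -> (INR u + 1) ^ u <= INR 3 * INR u ^ u.
Proof.
intros H.
replace (INR 3) with 3 by (simpl; ring).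
assert (Hu : 0 < INR u) by (apply lt_0_INR; exact H).
replace (INR u + 1) with (INR u * (1 + / INR u)) by (field; lra).
rewrite Rpow_mult_distr, Rmult_comm; apply Rmult_le_compat_r.
  apply pow_le; lra.
apply Rle_trans with (exp (/ INR u) ^ u).
  apply pow_incr; split.
    assert (0 < / INR u) by (apply Rinv_0_lt_compat; lra); lra.
  apply Rlt_le, exp_ineq1; apply Rgt_not_eq, Rinv_0_lt_compat; lra.
rewrite exp_pow_R, Rinv_r by lra; exact exp_le_3.
Qed.
Close Scope R_scope.

Require Import Defs.
From HB Require Import structures.
From mathcomp Require Import all_boot all_order all_algebra.
From Stdlib Require Import Rdefinitions.
From mathcomp Require Import reals Rstruct.
From mathcomp Require Import zify ring lra.
Set Implicit Arguments. Unset Strict Implicit. Unset Printing Implicit Defensive.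
Import Order.TTheory GRing.Theory Num.Theory.
From mathcomp Require Import ssrnat.

Definition matchingb (T1 T2 : finType) (M : {set T1 * T2}) : bool :=
  [forall x in M, forall y in M, ((x.1 == y.1) || (x.2 == y.2)) ==> (x == y)].

Lemma matchingP (T1 T2 : finType) (M : {set T1 * T2}) :
  reflect (forall x y, x \in M -> y \in M -> x.1 = y.1 \/ x.2 = y.2 -> x = y)
    (matchingb M).
Proof.
apply: (iffP idP) => [/forall_inP H x y xM yM Hxy | H].
  have /forall_inP/(_ y yM)/implyP := H x xM => H2; apply/eqP; apply: H2.
  by case: Hxy => ->; rewrite eqxx ?orbT.
apply/forall_inP => x xM; apply/forall_inP => y yM; apply/implyP.
by case/orP => /eqP e; apply/eqP; apply: H => //; [left|right].
Qed.

Lemma mfst (T1 T2 : finType) (M : {set T1 * T2}) x y :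
  matchingb M -> x \in M -> y \in M -> x.1 = y.1 -> x = y.
Proof. by move/matchingP => H xM yM e; apply: H => //; left. Qed.
Lemma msnd (T1 T2 : finType) (M : {set T1 * T2}) x y :
  matchingb M -> x \in M -> y \in M -> x.2 = y.2 -> x = y.
Proof. by move/matchingP => H xM yM e; apply: H => //; right. Qed.

Definition swap (T1 T2 : finType) (M : {set T1 * T2}) (f g : T1 * T2) :=
  (M :\ f :\ g) :|: [set (f.1, g.2); (g.1, f.2)].

Section SwapFacts.
End SwapFacts.

Lemma swap_facts (T1 T2 : finType) (M : {set T1 * T2}) f g :
  matchingb M -> f \in M -> g \in M -> f != g ->
  [/\ (f.1, g.2) \notin M, (g.1, f.2) \notin M & (f.1, g.2) != (g.1, f.2)].
Proof.
move=> Hm fM gM fg; split.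
- apply/negP => pM; have e := mfst Hm pM fM erefl.
  have e2 : g.2 = f.2 by rewrite -e.
  by have := msnd Hm gM fM e2 => efg; rewrite efg eqxx in fg.
- apply/negP => pM; have e := mfst Hm pM gM erefl.
  have e2 : f.2 = g.2 by rewrite -e.
  by have := msnd Hm fM gM e2 => efg; rewrite efg eqxx in fg.
- apply/eqP => e; have e1 : f.1 = g.1 by case: e.
  by have := mfst Hm fM gM e1 => efg; rewrite efg eqxx in fg.
Qed.

Lemma swap_match (T1 T2 : finType) (M : {set T1 * T2}) f g :
  matchingb M -> f \in M -> g \in M -> f != g -> matchingb (swap M f g).
Proof.
move=> Hm fM gM fg; apply/matchingP => x y.
have nf : forall z, z \in M -> z != f -> z.1 = f.1 \/ z.2 = f.2 -> False.
  move=> z zM zf [] e; [have := mfst Hm zM fM e|have := msnd Hm zM fM e];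
  by move=> ezf; rewrite ezf eqxx in zf.
have ng : forall z, z \in M -> z != g -> z.1 = g.1 \/ z.2 = g.2 -> False.
  move=> z zM zf [] e; [have := mfst Hm zM gM e|have := msnd Hm zM gM e];
  by move=> ezf; rewrite ezf eqxx in zf.
have nfg : f.1 = g.1 \/ g.2 = f.2 -> False.
  case=> e; [have := mfst Hm fM gM e| have := msnd Hm gM fM e] => e';
  by rewrite e' eqxx in fg.
rewrite !inE => Hx Hy Hxy.
have orE : forall (P Q : Prop) (e : P), P \/ Q by move=> *; left.
case/or3P: Hx => [/and3P[xg xf xM] | /eqP Ex | /eqP Ex];
case/or3P: Hy => [/and3P[yg yf yM] | /eqP Ey | /eqP Ey]; subst => //=;
  first (by apply: (matchingP _ Hm));
  exfalso; case: Hxy => /= e;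
  solve [ apply: (nf _ xM xf); solve [left; by rewrite ?e ?(esym e) | right; by rewrite ?e ?(esym e)]
        | apply: (ng _ xM xg); solve [left; by rewrite ?e ?(esym e) | right; by rewrite ?e ?(esym e)]
        | apply: (nf _ yM yf); solve [left; by rewrite ?e ?(esym e) | right; by rewrite ?e ?(esym e)]
        | apply: (ng _ yM yg); solve [left; by rewrite ?e ?(esym e) | right; by rewrite ?e ?(esym e)]
        | apply: nfg; solve [left; by rewrite ?e ?(esym e) | right; by rewrite ?e ?(esym e)] ].
Qed.

Lemma swapE (T1 T2 : finType) (M : {set T1 * T2}) f g :
  swap M f g = (f.1, g.2) |: ((g.1, f.2) |: (M :\ f :\ g)).
Proof.
apply/setP => x; rewrite /swap !inE.
by case: (x == (f.1, g.2)); case: (x == (g.1, f.2)); rewrite ?orbT ?orbF.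
Qed.

Lemma swap_card (T1 T2 : finType) (M : {set T1 * T2}) f g :
  matchingb M -> f \in M -> g \in M -> f != g -> #|swap M f g| = #|M|.
Proof.
move=> Hm fM gM fg; have [pM qM pq] := swap_facts Hm fM gM fg.
rewrite swapE !cardsU1 !inE negb_or negb_and pq (negbTE pM) (negbTE qM) /=.
rewrite /= (cardsD1 f M) (cardsD1 g (M :\ f)) fM !inE.
by rewrite !andbF /= orbT eq_sym fg gM.
Qed.

Lemma swap_in (T1 T2 : finType) (M : {set T1 * T2}) f g x :
  x \in swap M f g -> [\/ x = (f.1, g.2), x = (g.1, f.2) | [/\ x != f, x != g & x \in M]].
Proof.
rewrite !inE => /or3P[/and3P[? ? ?]|/eqP->|/eqP->]; [by constructor 3|by constructor 1|by constructor 2].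
Qed.

Lemma swap_old (T1 T2 : finType) (M : {set T1 * T2}) f g x :
  x \in M -> x != f -> x != g -> x \in swap M f g.
Proof. by move=> xM xf xg; rewrite !inE xM xf xg. Qed.

Lemma swap_p (T1 T2 : finType) (M : {set T1 * T2}) f g : (f.1, g.2) \in swap M f g.
Proof. by rewrite !inE eqxx !orbT. Qed.
Lemma swap_q (T1 T2 : finType) (M : {set T1 * T2}) f g : (g.1, f.2) \in swap M f g.
Proof. by rewrite !inE eqxx !orbT. Qed.

Lemma swap_inv (T1 T2 : finType) (M : {set T1 * T2}) f g :
  matchingb M -> f \in M -> g \in M -> f != g ->
  swap (swap M f g) (f.1, g.2) (g.1, f.2) = M.
Proof.
move=> Hm fM gM fg; have [pM qM pq] := swap_facts Hm fM gM fg.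
have pf : (f.1, g.2) != f by apply: contraNneq pM => ->.
have pg : (f.1, g.2) != g by apply: contraNneq pM => ->.
have qf : (g.1, f.2) != f by apply: contraNneq qM => ->.
have qg : (g.1, f.2) != g by apply: contraNneq qM => ->.
have fp := pf; rewrite eq_sym in fp. have gp := pg; rewrite eq_sym in gp.
have fq := qf; rewrite eq_sym in fq. have gq := qg; rewrite eq_sym in gq.
have qp := pq; rewrite eq_sym in qp. have gf := fg; rewrite eq_sym in gf.
apply/setP => x; rewrite /swap /= -!surjective_pairing !inE.
case: (eqVneq x f) => [->|xf];
  first by rewrite /= ?fM ?gM ?(negbTE pM) ?(negbTE qM) ?pq ?pf ?pg ?qf ?qg ?fp ?gp ?fq ?gq ?qp ?gf ?fg /= ?orbT ?andbF ?orbF ?andbT.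
case: (eqVneq x g) => [->|xg];
  first by rewrite /= ?fM ?gM ?(negbTE pM) ?(negbTE qM) ?pq ?pf ?pg ?qf ?qg ?fp ?gp ?fq ?gq ?qp ?gf ?fg /= ?orbT ?andbF ?orbF ?andbT.
case: (eqVneq x (f.1, g.2)) => [->|xp];
  first by rewrite /= ?fM ?gM ?(negbTE pM) ?(negbTE qM) ?pq ?pf ?pg ?qf ?qg ?fp ?gp ?fq ?gq ?qp ?gf ?fg /= ?orbT ?andbF ?orbF ?andbT.
case: (eqVneq x (g.1, f.2)) => [->|xq];
  first by rewrite /= ?fM ?gM ?(negbTE pM) ?(negbTE qM) ?pq ?pf ?pg ?qf ?qg ?fp ?gp ?fq ?gq ?qp ?gf ?fg /= ?orbT ?andbF ?orbF ?andbT.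
by rewrite /= ?orbF ?andbT.
Qed.

Definition cov1 (T1 T2 : finType) (M : {set T1 * T2}) := [set x.1 | x in M].
Definition cov2 (T1 T2 : finType) (M : {set T1 * T2}) := [set x.2 | x in M].

Lemma swap_cov1 (T1 T2 : finType) (M : {set T1 * T2}) f g :
  f \in M -> g \in M -> cov1 (swap M f g) = cov1 M.
Proof.
move=> fM gM; apply/setP => u; apply/imsetP/imsetP => [[x /swap_in[->|->|[_ _ xM]] ->]|[x xM ->]].
- by exists f.
- by exists g.
- by exists x.
case: (eqVneq x f) => [->|xf]; first by exists (f.1, g.2); rewrite ?swap_p.
case: (eqVneq x g) => [->|xg]; first by exists (g.1, f.2); rewrite ?swap_q.
by exists x => //; apply: swap_old.
Qed.

Lemma swap_cov2 (T1 T2 : finType) (M : {set T1 * T2}) f g :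
  f \in M -> g \in M -> cov2 (swap M f g) = cov2 M.
Proof.
move=> fM gM; apply/setP => u; apply/imsetP/imsetP => [[x /swap_in[->|->|[_ _ xM]] ->]|[x xM ->]].
- by exists g.
- by exists f.
- by exists x.
case: (eqVneq x f) => [->|xf]; first by exists (g.1, f.2); rewrite ?swap_q.
case: (eqVneq x g) => [->|xg]; first by exists (f.1, g.2); rewrite ?swap_p.
by exists x => //; apply: swap_old.
Qed.

Lemma card_cov1 (T1 T2 : finType) (M : {set T1 * T2}) :
  matchingb M -> #|cov1 M| = #|M|.
Proof. by move=> Hm; rewrite /cov1 card_in_imset // => x y xM yM; apply: (mfst Hm). Qed.
Lemma card_cov2 (T1 T2 : finType) (M : {set T1 * T2}) :
  matchingb M -> #|cov2 M| = #|M|.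
Proof. by move=> Hm; rewrite /cov2 card_in_imset // => x y xM yM; apply: (msnd Hm). Qed.

Lemma card_sum_cond (T : finType) (A : {set T}) (P : pred T) :
  #|[set x in A | P x]| = \sum_(x in A) (P x : nat).
Proof.
rewrite -sum1_card big_mkcond [RHS]big_mkcond /=; apply: eq_bigr => x _.
by rewrite inE; case: (x \in A); case: (P x).
Qed.

Lemma card_sum (T : finType) (P : pred T) :
  #|[set x | P x]| = \sum_x (P x : nat).
Proof.
rewrite -sum1_card big_mkcond /=; apply: eq_bigr => x _.
by rewrite inE; case: (P x).
Qed.

Lemma dcount (S K : finType) (X Y : {set S}) (D : S -> {set K})
  (phi : S -> K -> S) (a b : nat) :
  (forall x, x \in X -> a <= #|D x|) ->
  (forall x, x \in X -> {in D x &, injective (phi x)}) ->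
  (forall x k, x \in X -> k \in D x -> phi x k \in Y) ->
  (forall y, y \in Y -> #|[set x in X | y \in phi x @: D x]| <= b) ->
  #|X| * a <= #|Y| * b.
Proof.
move=> Ha Hinj HY Hb.
have E1 : #|X| * a <= \sum_(x in X) \sum_(y in Y) (y \in phi x @: D x : nat).
  rewrite -sum1_card big_distrl /=; apply: leq_sum => x Hx.
  rewrite mul1n -card_sum_cond.
  have -> : [set y in Y | y \in phi x @: D x] = phi x @: D x.
    apply/setP => y; rewrite inE; apply/andP/idP => [[]//|Hy]; split=> //.
    by case/imsetP: Hy => k Hk ->; apply: HY.
  rewrite card_in_imset; [exact: Ha| exact: Hinj].
apply: (leq_trans E1); rewrite exchange_big /=.
rewrite -sum1_card big_distrl /=; apply: leq_sum => y Hy.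
by rewrite mul1n -card_sum_cond; apply: Hb.
Qed.

Lemma good_card (T : finType) (Z : {set T}) (P : pred T) d :
  #|[set z in Z | ~~ P z]| <= d -> #|Z| - d <= #|[set z in Z | P z]|.
Proof.
move=> H; have E : #|[set z in Z | P z]| + #|[set z in Z | ~~ P z]| = #|Z|.
  rewrite !card_sum_cond -big_split /= -sum1_card; apply: eq_bigr => z _.
  by case: (P z).
by rewrite -E; lia.
Qed.

Lemma fiber_card (T1 T2 : finType) (P : {set T1 * T2}) (X0 : {set T1}) a :
  (forall u, u \in X0 -> a <= #|[set w | (u, w) \in P]|) -> #|X0| * a <= #|P|.
Proof.
move=> H.
have -> : #|P| = \sum_u #|[set w | (u, w) \in P]|.
  have -> : #|P| = \sum_p ((p \in P) : nat).
    by rewrite -card_sum; apply: eq_card => p; rewrite inE.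
  rewrite (eq_bigr (fun p => (((p.1, p.2) \in P) : nat))); last by move=> [u w].
  rewrite -(pair_bigA _ (fun u w => (((u, w) \in P) : nat))) /=.
  by apply: eq_bigr => u _; rewrite card_sum.
rewrite -sum1_card big_distrl /=.
rewrite [X in _ <= X](bigID (fun u => u \in X0)) /=.
apply: leq_trans (leq_addr _ _); apply: leq_sum => u Hu; rewrite mul1n; exact: H.
Qed.

Definition Sk (T1 T2 : finType) (F : {set T1 * T2}) (A : {set T1}) (B : {set T2})
  (k : nat) : {set {set T1 * T2}} :=
  [set M : {set T1 * T2} | [&& M \subset F, M \subset setX A B, matchingb M & #|M| == k]].

Lemma SkP (T1 T2 : finType) (F : {set T1 * T2}) (A : {set T1}) (B : {set T2}) k (M : {set T1 * T2}) :
  reflect [/\ M \subset F, M \subset setX A B, matchingb M & #|M| = k] (M \in Sk F A B k).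
Proof. by rewrite inE; apply: (iffP and4P) => [[? ? ? /eqP]|[? ? ? ->]]. Qed.

Definition defic (T1 T2 : finType) (F : {set T1 * T2}) (A : {set T1}) (B : {set T2})
  (d : nat) : Prop :=
  (forall a, a \in A -> #|[set b in B | (a, b) \notin F]| <= d) /\
  (forall b, b \in B -> #|[set a in A | (a, b) \notin F]| <= d).

Lemma add_match (T1 T2 : finType) (M : {set T1 * T2}) p :
  matchingb M -> p.1 \notin cov1 M -> p.2 \notin cov2 M -> matchingb (p |: M).
Proof.
move=> Hm n1 n2; apply/matchingP => x y; rewrite !inE.
case/orP => [/eqP->|xM]; case/orP => [/eqP->|yM] //.
- case=> e; [case/negP: n1; rewrite e; apply: imset_f
            |case/negP: n2; rewrite e; apply: imset_f] => //.
- case=> e; [case/negP: n1; rewrite -e; apply: imset_f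
            |case/negP: n2; rewrite -e; apply: imset_f] => //.
- by apply: (matchingP _ Hm).
Qed.

Lemma bad1 (T1 T2 : finType) (F : {set T1 * T2}) A B d (M : {set T1 * T2}) a :
  matchingb M -> M \subset setX A B -> defic F A B d -> a \in A ->
  #|[set f in M | (a, f.2) \notin F]| <= d.
Proof.
move=> Hm MAB [D1 _] aA; apply: leq_trans (D1 a aA).
rewrite -(@card_in_imset _ _ snd); last first.
  by move=> x y; rewrite !inE => /andP[xM _] /andP[yM _]; apply: (msnd Hm).
apply: subset_leq_card; apply/subsetP => b /imsetP[f]; rewrite !inE => /andP[fM fF] ->.
rewrite fF andbT; by have := subsetP MAB f fM; rewrite inE => /andP[].
Qed.

Lemma bad2 (T1 T2 : finType) (F : {set T1 * T2}) A B d (M : {set T1 * T2}) b :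
  matchingb M -> M \subset setX A B -> defic F A B d -> b \in B ->
  #|[set f in M | (f.1, b) \notin F]| <= d.
Proof.
move=> Hm MAB [_ D2] bB; apply: leq_trans (D2 b bB).
rewrite -(@card_in_imset _ _ fst); last first.
  by move=> x y; rewrite !inE => /andP[xM _] /andP[yM _]; apply: (mfst Hm).
apply: subset_leq_card; apply/subsetP => a /imsetP[f]; rewrite !inE => /andP[fM fF] ->.
rewrite fF andbT; by have := subsetP MAB f fM; rewrite inE => /andP[].
Qed.

Lemma cov1_sub (T1 T2 : finType) (M : {set T1 * T2}) A B :
  M \subset setX A B -> cov1 M \subset A.
Proof.
move=> H; apply/subsetP => u /imsetP[x xM ->].
by have := subsetP H x xM; rewrite inE => /andP[].
Qed.
Lemma cov2_sub (T1 T2 : finType) (M : {set T1 * T2}) A B :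
  M \subset setX A B -> cov2 M \subset B.
Proof.
move=> H; apply/subsetP => u /imsetP[x xM ->].
by have := subsetP H x xM; rewrite inE => /andP[].
Qed.

Lemma notin_cov (T1 T2 : finType) (M : {set T1 * T2}) p :
  p.1 \notin cov1 M -> p \notin M.
Proof. by apply: contra => pM; apply: imset_f. Qed.

Lemma stepE (T1 T2 : finType) (F : {set T1 * T2}) (A : {set T1}) (B : {set T2}) d n k :
  #|A| = n -> #|B| = n -> defic F A B d ->
  #|Sk F A B k| * ((n - k) * (n - k - d)) <= #|Sk F A B k.+1| * k.+1.
Proof.
move=> cA cB Dd.
apply: (@dcount _ _ _ _
  (fun M => [set p | [&& p.1 \in A :\: cov1 M, p.2 \in B :\: cov2 M & p \in F]])
  (fun M p => p |: M)).
- move=> M /SkP[MF MAB Hm cM].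
  have c1 : #|A :\: cov1 M| = n - k by rewrite cardsDS; [rewrite card_cov1 // cA cM | exact: cov1_sub MAB].
  have c2 : #|B :\: cov2 M| = n - k by rewrite cardsDS; [rewrite card_cov2 // cB cM | exact: cov2_sub MAB].
  rewrite -c1; apply: fiber_card => u Hu.
  have -> : [set w | (u, w) \in [set p | [&& p.1 \in A :\: cov1 M, p.2 \in B :\: cov2 M & p \in F]]]
          = [set w in B :\: cov2 M | (u, w) \in F].
    by move: Hu; rewrite inE => Hu; apply/setP => w; rewrite !inE /= Hu.
  rewrite c1 -c2; apply: good_card.
  apply: leq_trans (proj1 Dd u _); last by move: Hu; rewrite inE => /andP[].
  by apply: subset_leq_card; apply/subsetP => w; rewrite !inE => /andP[/andP[_ ->] ->].
- move=> M _ p q; rewrite !inE => /and3P[/andP[p1 _] _ _] _ e.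
  have : p \in q |: M by rewrite -e setU11.
  rewrite !inE => /orP[/eqP //|pM].
  by case/negP: p1; apply: imset_f.
- move=> M p HM; case/SkP: HM => MF MAB Hm cM; rewrite !inE => /and3P[/andP[n1 a1] /andP[n2 b2] pF].
  apply/and4P; split.
  + by rewrite subUset sub1set pF.
  + by rewrite subUset sub1set MAB inE a1 b2.
  + exact: add_match.
  + by rewrite cardsU1 (notin_cov n1) cM.
- move=> M' /SkP[_ _ _ cM'].
  apply: leq_trans (_ : #|[set M' :\ e | e in M']| <= _); last by rewrite -cM' leq_imset_card.
  apply: subset_leq_card; apply/subsetP => M; rewrite inE => /andP[/SkP[_ _ _ _] /imsetP[p]].
  rewrite !inE => /and3P[/andP[p1 _] _ _] ->.
  apply/imsetP; exists p; first exact: setU11.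
  by rewrite setU1K // (notin_cov (p := p)).
Qed.

Definition DS (T1 T2 : finType) (F : {set T1 * T2}) (A : {set T1}) (B : {set T2})
  (M : {set T1 * T2}) : {set (T1 * T2) * (T1 * T2)} :=
  [set x | [&& x.1.1 \in A :\: cov1 M, x.1.2 \in B :\: cov2 M, x.2 \in M,
              (x.1.1, x.2.2) \in F & (x.2.1, x.1.2) \in F]].

Lemma DS_facts (T1 T2 : finType) (F : {set T1 * T2}) A B (M : {set T1 * T2}) x :
  matchingb M -> x \in DS F A B M ->
  [/\ matchingb (x.1 |: M), x.1 \in x.1 |: M, x.2 \in x.1 |: M, x.1 != x.2 & x.1 \notin M].
Proof.
move=> Hm; rewrite !inE => /and5P[/andP[n1 _] /andP[n2 _] xM _ _].
have x1M : x.1 \notin M by apply: notin_cov.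
split.
- exact: add_match.
- by rewrite ?inE eqxx.
- by rewrite ?inE xM orbT.
- by apply: contraNneq x1M => ->.
- exact: x1M.
Qed.

Lemma stepS (T1 T2 : finType) (F : {set T1 * T2}) (A : {set T1}) (B : {set T2}) d n k :
  #|A| = n -> #|B| = n -> defic F A B d ->
  #|Sk F A B k| * ((n - k) * (n - k) * (k - 2 * d)) <= #|Sk F A B k.+1| * (k.+1 * k.+1).
Proof.
move=> cA cB Dd.
apply: (@dcount _ _ _ _ (DS F A B) (fun M x => swap (x.1 |: M) x.1 x.2)).
- move=> M /SkP[MF MAB Hm cM].
  have c1 : #|A :\: cov1 M| = n - k.
    by rewrite cardsDS; [rewrite card_cov1 // cA cM | exact: cov1_sub MAB].
  have c2 : #|B :\: cov2 M| = n - k.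
    by rewrite cardsDS; [rewrite card_cov2 // cB cM | exact: cov2_sub MAB].
  have -> : (n - k) * (n - k) = #|setX (A :\: cov1 M) (B :\: cov2 M)| by rewrite cardsX c1 c2.
  apply: fiber_card => p Hp.
  move: Hp; rewrite inE => /andP[Hu Hw].
  have -> : [set f | (p, f) \in DS F A B M]
          = [set f in M | ((p.1, f.2) \in F) && ((f.1, p.2) \in F)].
    by apply/setP => f; rewrite !inE /=; move: Hu Hw; rewrite !inE => -> ->.
  rewrite -cM; apply: good_card.
  move: Hu Hw; rewrite !inE => /andP[_ Hu] /andP[_ Hw].
  apply: leq_trans (_ : #|[set f in M | (p.1, f.2) \notin F] :|: [set f in M | (f.1, p.2) \notin F]| <= _).
    by apply: subset_leq_card; apply/subsetP => f; rewrite !inE negb_and => /andP[-> /orP[]->]; rewrite ?orbT.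
  apply: leq_trans (leq_card_setU _ _) _.
  by rewrite mul2n -addnn leq_add // ?(bad1 Hm MAB Dd Hu) ?(bad2 Hm MAB Dd Hw).
- move=> M /SkP[MF MAB Hm cM] x y Hx Hy e.
  have [mx x1 x2 xne x1M] := DS_facts Hm Hx.
  have [my y1 y2 yne y1M] := DS_facts Hm Hy.
  move: Hx Hy e x1 x2 xne x1M mx y1 y2 yne y1M my.
  case: x => [[u w] [a b]]; case: y => [[u' w'] [a' b']] /=.
  move=> Hx Hy e x1 x2 xne x1M mx y1 y2 yne y1M my.
  move: Hx; rewrite !inE /= => /and5P[/andP[nu _] /andP[nw _] _ _ _].
  move: Hy; rewrite !inE /= => /and5P[/andP[nu' _] /andP[nw' _] _ _ _].
  have c1 := swap_cov1 x1 x2; have c1' := swap_cov1 y1 y2.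
  have c2 := swap_cov2 x1 x2; have c2' := swap_cov2 y1 y2.
  rewrite e c1' /cov1 !imsetU1 /= in c1; rewrite e c2' /cov2 !imsetU1 /= in c2.
  have eu : u = u'.
    have : u \in u' |: cov1 M by rewrite /cov1 c1 setU11.
    by case/setU1P => // H; rewrite H in nu.
  have ew : w = w'.
    have : w \in w' |: cov2 M by rewrite /cov2 c2 setU11.
    by case/setU1P => // H; rewrite H in nw.
  subst u' w'.
  have Ms := swap_match mx x1 x2 xne.
  have p1 := @swap_p _ _ ((u, w) |: M) (u, w) (a, b).
  have p2 := @swap_p _ _ ((u, w) |: M) (u, w) (a', b').
  have q1 := @swap_q _ _ ((u, w) |: M) (u, w) (a, b).
  have q2 := @swap_q _ _ ((u, w) |: M) (u, w) (a', b').
  rewrite -e in p2 q2.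
  have := mfst Ms p1 p2 erefl; case=> ->.
  have := msnd Ms q1 q2 erefl; case=> ->.
  by [].
- move=> M x HM Hx; case/SkP: HM => MF MAB Hm cM.
  have [mx x1 x2 xne x1M] := DS_facts Hm Hx.
  move: (Hx); rewrite !inE => /and5P[/andP[n1 a1] /andP[n2 b2] xM pF qF].
  have := subsetP MAB _ xM; rewrite inE => /andP[a2 b2'].
  apply/and4P; split.
  + apply/subsetP => z /swap_in [->|->|[zf zg]] //.
    by rewrite !inE (negbTE zf) /= => /(subsetP MF).
  + apply/subsetP => z /swap_in [->|->|[zf zg]]; rewrite ?inE ?a1 ?b2' ?a2 ?b2 //.
    by rewrite (negbTE zf) /= => /(subsetP MAB); rewrite inE.
  + exact: (swap_match mx x1 x2 xne).
  + by rewrite swap_card // cardsU1 x1M cM.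
- move=> M' HM'; case/SkP: HM' => _ _ _ cM'.
  apply: leq_trans (_ : #|[set (swap M' z.1 z.2) :\ (z.1.1, z.2.2) | z in setX M' M']| <= _);
    last by rewrite -cM' -cardsX leq_imset_card.
  apply: subset_leq_card; apply/subsetP => M; rewrite inE => /andP[HM /imsetP[x Hx E]].
  case/SkP: HM => _ _ Hm _; have [mx x1 x2 xne x1M] := DS_facts Hm Hx.
  apply/imsetP; exists ((x.1.1, x.2.2), (x.2.1, x.1.2)).
    by rewrite inE E swap_p swap_q.
  by rewrite /= E swap_inv // -surjective_pairing setU1K.
Qed.

Lemma Sk0 (T1 T2 : finType) (F : {set T1 * T2}) (A : {set T1}) (B : {set T2}) :
  0 < #|Sk F A B 0|.
Proof.
apply/card_gt0P; exists set0; rewrite inE !sub0set cards0 /= andbT.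
by apply/matchingP => x y; rewrite inE.
Qed.

Lemma lowerL (T1 T2 : finType) (F : {set T1 * T2}) (A : {set T1}) (B : {set T2}) d n :
  #|A| = n -> #|B| = n -> defic F A B d -> 8 * d <= n ->
  n`! <= 4 ^ n * #|Sk F A B n|.
Proof.
move=> cA cB Dd h8.
have step : forall k, k < n ->
    (n - k) * (n - k) * #|Sk F A B k| <= 4 * k.+1 * #|Sk F A B k.+1|.
  move=> k kn; set s := #|Sk F A B k|; set s' := #|Sk F A B k.+1|.
  case: (ltnP (2 * k) n) => h.
  - have E := stepE k cA cB Dd; rewrite -/s -/s' in E.
    have h2 : n - k <= 4 * (n - k - d) by lia.
    apply: leq_trans (_ : (n - k) * (4 * (n - k - d)) * s <= _).
      by rewrite leq_mul2r leq_mul2l h2 !orbT.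
    have -> : (n - k) * (4 * (n - k - d)) * s = 4 * (s * ((n - k) * (n - k - d))) by ring.
    by rewrite -mulnA leq_mul2l [k.+1 * _]mulnC E orbT.
  - have E := stepS k cA cB Dd; rewrite -/s -/s' in E.
    have h2 : k.+1 <= 4 * (k - 2 * d) by lia.
    rewrite -(@leq_pmul2r k.+1) //.
    apply: leq_trans (_ : (n - k) * (n - k) * s * (4 * (k - 2 * d)) <= _).
      by rewrite leq_mul2l h2 orbT.
    have -> : (n - k) * (n - k) * s * (4 * (k - 2 * d)) = 4 * (s * ((n - k) * (n - k) * (k - 2 * d))) by ring.
    have -> : 4 * k.+1 * s' * k.+1 = 4 * (s' * (k.+1 * k.+1)) by ring.
    by rewrite leq_mul2l E orbT.
have main : forall k, k <= n ->
    n`! * n`! <= 4 ^ k * k`! * ((n - k)`! * (n - k)`!) * #|Sk F A B k|.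
  elim=> [_|k IH kn].
  - rewrite expn0 fact0 subn0 !mul1n -{1}(muln1 (_ * _)) leq_mul2l Sk0 orbT //.
  - apply: leq_trans (IH (ltnW kn)) _.
    have -> : n - k = (n - k.+1).+1 by lia.
    set m := n - k.+1.
    have E := step k kn; have em : n - k = m.+1 by rewrite /m; lia.
    rewrite em in E.
    have -> : 4 ^ k * k`! * (m.+1`! * m.+1`!) * #|Sk F A B k|
      = (4 ^ k * k`! * (m`! * m`!)) * (m.+1 * m.+1 * #|Sk F A B k|) by rewrite !factS; ring.
    have -> : 4 ^ k.+1 * k.+1`! * (m`! * m`!) * #|Sk F A B k.+1|
      = (4 ^ k * k`! * (m`! * m`!)) * (4 * k.+1 * #|Sk F A B k.+1|) by rewrite factS expnS; ring.
    by rewrite leq_mul2l E orbT.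
have H := main n (leqnn n); rewrite subnn fact0 !muln1 in H.
rewrite -(@leq_pmul2l n`!) ?fact_gt0 //; apply: (leq_trans H).
by rewrite [4 ^ n * _]mulnC -mulnA.
Qed.

Lemma expn_pow (m n : nat) : (m ^ n)%N = Nat.pow m n.
Proof. by elim: n => //= n IH; rewrite expnS IH mulnE. Qed.

Lemma succ_pow_le (t : nat) : ((t.+1) ^ t <= 3 * t ^ t)%N.
Proof.
case: t => [//|t]; set u := t.+1.
apply/leP; apply: INR_le.
rewrite mulnE mult_INR !expn_pow !pow_INR S_INR.
by apply: succ_pow_R; apply/ltP.
Qed.

Lemma pow_fact (t : nat) : (t ^ t <= 3 ^ t * t`!)%N.
Proof.
elim: t => [//|t IH].
rewrite !expnS factS.
apply: leq_trans (_ : t.+1 * (3 * t ^ t) <= _)%N.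
  by rewrite leq_mul2l succ_pow_le orbT.
have -> : (3 * 3 ^ t * (t.+1 * t`!) = t.+1 * (3 * (3 ^ t * t`!)))%N by ring.
by rewrite !leq_mul2l IH !orbT.
Qed.

Definition PMs (I : nat) (F : edge_set I) := Sk F [set: 'I_I] [set: 'I_I] I.
Definition NT (I : nat) (F : edge_set I) (T : {set 'I_I * 'I_I}) :=
  #|[set M in PMs F | T \subset M]|.

Lemma subXT (I : nat) (M : {set 'I_I * 'I_I}) : M \subset setX [set: 'I_I] [set: 'I_I].
Proof. by apply/subsetP => z _; rewrite inE !in_setT. Qed.

Lemma pm_of_PMs (I : nat) (F : edge_set I) M : M \in PMs F -> perfect_matching F M.
Proof.
case/SkP => MF _ Hm cM; split => //.
have cT1 : cov1 M = [set: 'I_I].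
  by apply/eqP; rewrite eqEcard subsetT /= cardsT card_ord (card_cov1 Hm) cM.
have cT2 : cov2 M = [set: 'I_I].
  by apply/eqP; rewrite eqEcard subsetT /= cardsT card_ord (card_cov2 Hm) cM.
split => u.
- have : u \in cov1 M by rewrite cT1 in_setT.
  case/imsetP => x xM ->; rewrite /deg0.
  suff -> : [set e in M | e.1 == x.1] = [set x] by rewrite cards1.
  apply/setP => e; rewrite !inE; apply/andP/eqP => [[eM /eqP]|->]; last by rewrite xM eqxx.
  exact: (mfst Hm eM xM).
- have : u \in cov2 M by rewrite cT2 in_setT.
  case/imsetP => x xM ->; rewrite /deg1.
  suff -> : [set e in M | e.2 == x.2] = [set x] by rewrite cards1.
  apply/setP => e; rewrite !inE; apply/andP/eqP => [[eM /eqP]|->]; last by rewrite xM eqxx.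
  exact: (msnd Hm eM xM).
Qed.

Lemma cardC_ord (I : nat) (P : pred 'I_I) :
  #|[set b | ~~ P b]| + #|[set b | P b]| = I.
Proof.
rewrite !card_sum -big_split /=.
rewrite -[RHS](card_ord I) -sum1_card; apply: eq_bigr => b _; by case: (P b).
Qed.

Lemma defic_of_deg (I : nat) (F : edge_set I) d :
  (forall u, I <= deg0 F u + d) -> (forall w, I <= deg1 F w + d) ->
  forall A B, defic F A B d.
Proof.
move=> H0 H1 A B; split.
- move=> a _.
  apply: leq_trans (_ : #|[set b | (a, b) \notin F]| <= _).
    by apply: subset_leq_card; apply/subsetP => b; rewrite !inE => /andP[].
  have E : deg0 F a = #|[set b | (a, b) \in F]|.
    rewrite /deg0 -(@card_in_imset _ _ snd); last first.
      move=> x y; rewrite !inE => /andP[_ /eqP ex] /andP[_ /eqP ey] e2.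
      by move: ex ey e2; case: x => ? ?; case: y => ? ? /= -> -> ->.
    apply: eq_card => b; rewrite inE; apply/imsetP/idP => [[x]|bF].
      by rewrite inE => /andP[xF /eqP <-] ->; rewrite -surjective_pairing.
    by exists (a, b); rewrite // inE bF eqxx.
  have := cardC_ord (fun b => (a, b) \in F); have := H0 a; rewrite E /=.
  move: #|[set b | (a, b) \in F]| #|[set b | (a, b) \notin F]| => x y h1 h2; by rewrite -h2 addnC leq_add2l in h1.
- move=> b _.
  apply: leq_trans (_ : #|[set a | (a, b) \notin F]| <= _).
    by apply: subset_leq_card; apply/subsetP => a; rewrite !inE => /andP[].
  have E : deg1 F b = #|[set a | (a, b) \in F]|.
    rewrite /deg1 -(@card_in_imset _ _ fst); last first.
      move=> x y; rewrite !inE => /andP[_ /eqP ex] /andP[_ /eqP ey] e2.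
      by move: ex ey e2; case: x => ? ?; case: y => ? ? /= -> -> ->.
    apply: eq_card => a; rewrite inE; apply/imsetP/idP => [[x]|aF].
      by rewrite inE => /andP[xF /eqP <-] ->; rewrite -surjective_pairing.
    by exists (a, b); rewrite // inE aF eqxx.
  have := cardC_ord (fun a => (a, b) \in F); have := H1 b; rewrite E /=.
  move: #|[set a | (a, b) \in F]| #|[set a | (a, b) \notin F]| => x y h1 h2; by rewrite -h2 addnC leq_add2l in h1.
Qed.

Lemma small_step (m : nat) (F : edge_set m) d (T : {set 'I_m * 'I_m}) e :
  defic F setT setT d -> e \in T ->
  NT F T * (m - #|T| - 2 * d) <= NT F (T :\ e) * 1.
Proof.
move=> Dd eT; rewrite /NT.
apply: (@dcount _ _ _ _
  (fun M => [set f in M :\: T | ((e.1, f.2) \in F) && ((f.1, e.2) \in F)])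
  (fun M f => swap M e f)).
- move=> M; rewrite inE => /andP[/SkP[MF _ Hm cM] TM].
  have cD : #|M :\: T| = m - #|T| by rewrite cardsDS // cM.
  rewrite -cD; apply: good_card.
  apply: leq_trans (_ : #|[set f in M | (e.1, f.2) \notin F] :|: [set f in M | (f.1, e.2) \notin F]| <= _).
    apply: subset_leq_card; apply/subsetP => f; rewrite !inE negb_and.
    by case/andP => /andP[_ ->] /orP[]->; rewrite ?orbT.
  apply: leq_trans (leq_card_setU _ _) _.
  by rewrite mul2n -addnn leq_add // ?(bad1 Hm (subXT M) Dd (in_setT _)) ?(bad2 Hm (subXT M) Dd (in_setT _)).
- move=> M; rewrite inE => /andP[/SkP[MF _ Hm cM] TM] f1 f2.
  rewrite !inE => /andP[/andP[f1T f1M] _] /andP[/andP[f2T f2M] _] E.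
  have eM : e \in M := subsetP TM e eT.
  have ef1 : e != f1 by apply: contraNneq f1T => <-.
  have Ms := swap_match Hm eM f1M ef1.
  have p1 := @swap_p _ _ M e f1.
  have p2 := @swap_p _ _ M e f2; rewrite -E in p2.
  have := mfst Ms p1 p2 erefl; case=> e2.
  exact: (msnd Hm f1M f2M e2).
- move=> M f HM Hf; move: HM; rewrite inE => /andP[/SkP[MF _ Hm cM] TM].
  move: Hf; rewrite !inE => /andP[/andP[fT fM] /andP[pF qF]].
  have eM : e \in M := subsetP TM e eT.
  have ef : e != f by apply: contraNneq fT => <-.
  apply/andP; split.
    apply/and4P; split.
    + apply/subsetP => z /swap_in [->|->|[ze zf zM]] //; exact: (subsetP MF).
    + exact: subXT.
    + exact: (swap_match Hm eM fM ef).
    + by rewrite swap_card ?cM.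
  apply/subsetP => z /setD1P[ze zT].
  apply: swap_old => //; first exact: (subsetP TM).
  by apply: contraNneq fT => <-.
- move=> Y; rewrite inE => /andP[/SkP[_ _ HmY _] _].
  apply/card_le1_eqP => M1 M2; rewrite !inE.
  move=> /andP[/andP[/and4P[_ _ Hm1 _] TM1] /imsetP[f1 Hf1 E1]].
  move=> /andP[/andP[/and4P[_ _ Hm2 _] TM2] /imsetP[f2 Hf2 E2]].
  move: Hf1 Hf2; rewrite !inE => /andP[/andP[f1T f1M] _] /andP[/andP[f2T f2M] _].
  have eM1 : e \in M1 := subsetP TM1 e eT.
  have eM2 : e \in M2 := subsetP TM2 e eT.
  have ef1 : e != f1 by apply: contraNneq f1T => <-.
  have ef2 : e != f2 by apply: contraNneq f2T => <-.
  have p1 := @swap_p _ _ M1 e f1; rewrite -E1 in p1.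
  have p2 := @swap_p _ _ M2 e f2; rewrite -E2 in p2.
  have q1 := @swap_q _ _ M1 e f1; rewrite -E1 in q1.
  have q2 := @swap_q _ _ M2 e f2; rewrite -E2 in q2.
  have := mfst HmY p1 p2 erefl; case=> e2.
  have := msnd HmY q1 q2 erefl; case=> e1.
  have ef : f1 = f2 by rewrite [f1]surjective_pairing [f2]surjective_pairing e1 e2.
  subst f2.
  by rewrite -(swap_inv Hm1 eM1 f1M ef1) -(swap_inv Hm2 eM2 f2M ef2) -E1 -E2.
Qed.

Lemma small_chain (m : nat) (F : edge_set m) d :
  defic F setT setT d -> 16 * d <= m ->
  forall t (T : {set 'I_m * 'I_m}), #|T| = t -> 2 * t <= m ->
  NT F T * m ^ t <= 4 ^ t * NT F set0.
Proof.
move=> Dd h16; elim=> [|t IH] T cT ht.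
  by move/cards0_eq: cT => ->; rewrite expn0 muln1 mul1n.
have /card_gt0P[e eT] : 0 < #|T| by rewrite cT.
have cT' : #|T :\ e| = t by move: cT; rewrite (cardsD1 e T) eT add1n => [[]].
have H : NT F (T :\ e) * m ^ t <= 4 ^ t * NT F set0 by apply: IH => //; lia.
have K := small_step Dd eT; rewrite cT muln1 in K.
have h4 : m <= 4 * (m - t.+1 - 2 * d) by lia.
rewrite expnS.
apply: leq_trans (_ : NT F T * (4 * (m - t.+1 - 2 * d)) * m ^ t <= _).
  by rewrite mulnA leq_mul2r leq_mul2l h4 !orbT.
have -> : NT F T * (4 * (m - t.+1 - 2 * d)) * m ^ t
        = 4 * (NT F T * (m - t.+1 - 2 * d)) * m ^ t by ring.
apply: leq_trans (_ : 4 * NT F (T :\ e) * m ^ t <= _).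
  by rewrite leq_mul2r leq_mul2l K !orbT.
by rewrite expnS -!mulnA leq_mul2l H orbT.
Qed.

Lemma out_cov (T1 T2 : finType) (T M : {set T1 * T2}) x :
  matchingb M -> T \subset M -> x \in M -> x \notin T ->
  x.1 \notin cov1 T /\ x.2 \notin cov2 T.
Proof.
move=> Hm TM xM xT; split; apply/negP => /imsetP[y yT ey].
- by have := mfst Hm xM (subsetP TM y yT) ey => exy; rewrite exy yT in xT.
- by have := msnd Hm xM (subsetP TM y yT) ey => exy; rewrite exy yT in xT.
Qed.

Lemma union_split (T1 T2 : finType) (T M P : {set T1 * T2}) :
  matchingb M -> T \subset M -> P \subset setX (cov1 T) (cov2 T) ->
  P = [set x in (M :\: T) :|: P | x.1 \in cov1 T] /\
  M :\: T = [set x in (M :\: T) :|: P | x.1 \notin cov1 T].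
Proof.
move=> Hm TM PS; split; apply/setP => x; rewrite !inE.
- case xP: (x \in P); first by have := subsetP PS x xP; rewrite inE orbT => /andP[->].
  rewrite orbF; case xT: (x \in T) => //=; case xM: (x \in M) => //=.
  by have [/negbTE -> _] := out_cov Hm TM xM (negbT xT).
- case xT: (x \in T) => /=.
    case xP: (x \in P) => //=; by have := subsetP PS x xP; rewrite inE => /andP[->].
  case xM: (x \in M) => /=; first by have [/negbTE -> _] := out_cov Hm TM xM (negbT xT).
  case xP: (x \in P) => //=; by have := subsetP PS x xP; rewrite inE => /andP[->].
Qed.

Lemma large_step (m : nat) (F : edge_set m) (T : {set 'I_m * 'I_m}) :
  NT F T * #|Sk F (cov1 T) (cov2 T) (#|T|)| <= NT F set0 * 1.
Proof.
rewrite /NT.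
apply: (@dcount _ _ _ _ (fun _ => Sk F (cov1 T) (cov2 T) (#|T|)) (fun M P => (M :\: T) :|: P)).
- by [].
- move=> M HM P1 P2 HP1 HP2 E.
  move: HM; rewrite inE => /andP[/SkP[_ _ Hm _] TM].
  case/SkP: HP1 => _ S1 _ _; case/SkP: HP2 => _ S2 _ _.
  by rewrite (union_split Hm TM S1).1 (union_split Hm TM S2).1 E.
- move=> M P HM HP; move: HM; rewrite inE => /andP[/SkP[MF _ Hm cM] TM].
  case/SkP: HP => PF PS HmP cP.
  rewrite inE sub0set andbT; apply/SkP; split.
  + by rewrite subUset PF andbT; apply: subset_trans MF; apply: subsetDl.
  + exact: subXT.
  + apply/matchingP => x y; rewrite !inE.
    have oP : forall z, z \in P -> (z.1 \in cov1 T) && (z.2 \in cov2 T).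
      by move=> z zP; have := subsetP PS z zP; rewrite inE.
    case/orP => [/andP[xT xM]|xP]; case/orP => [/andP[yT yM]|yP].
    * by apply: (matchingP _ Hm).
    * have [o1 o2] := out_cov Hm TM xM xT; have /andP[c1 c2] := oP y yP.
      by case=> e; [rewrite e c1 in o1 | rewrite e c2 in o2].
    * have [o1 o2] := out_cov Hm TM yM yT; have /andP[c1 c2] := oP x xP.
      by case=> e; [rewrite -e c1 in o1 | rewrite -e c2 in o2].
    * by apply: (matchingP _ HmP).
  + have dj : [disjoint M :\: T & P].
      apply/pred0P => x /=; apply/andP => -[]; rewrite inE => /andP[xT xM] xP.
      have [o1 _] := out_cov Hm TM xM xT; have := subsetP PS x xP.
      by rewrite inE (negbTE o1).
    have E := (leq_card_setU (M :\: T) P).2; rewrite dj in E; move/eqP: E => ->.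
    have := subset_leq_card TM; rewrite cardsDS // cP cM; lia.
- move=> Y HY; apply/card_le1_eqP => M1 M2; rewrite !inE.
  move=> /andP[/andP[/and4P[_ _ Hm1 _] TM1] /imsetP[P1 HP1 E1]].
  move=> /andP[/andP[/and4P[_ _ Hm2 _] TM2] /imsetP[P2 HP2 E2]].
  case/SkP: HP1 => _ S1 _ _; case/SkP: HP2 => _ S2 _ _.
  have D1 := (union_split Hm1 TM1 S1).2; have D2 := (union_split Hm2 TM2 S2).2.
  rewrite -E1 in D1; rewrite -E2 in D2.
  apply/setP => x; case xT: (x \in T).
    by rewrite (subsetP TM1 x xT) (subsetP TM2 x xT).
  have : (x \in M1 :\: T) = (x \in M2 :\: T) by rewrite D1 D2.
  by rewrite !inE xT.
Qed.

Lemma defic_sub (T1 T2 : finType) (F : {set T1 * T2}) d (A : {set T1}) (B : {set T2}) :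
  defic F setT setT d -> defic F A B d.
Proof.
move=> [D1 D2]; split.
- move=> a _; apply: leq_trans (D1 a (in_setT a)).
  by apply: subset_leq_card; apply/subsetP => b; rewrite !inE => /andP[_ ->].
- move=> b _; apply: leq_trans (D2 b (in_setT b)).
  by apply: subset_leq_card; apply/subsetP => a; rewrite !inE => /andP[_ ->].
Qed.

Lemma expn_mono (a b t : nat) : a <= b -> a ^ t <= b ^ t.
Proof. by case: t => [//|t] h; rewrite leq_exp2r. Qed.

Lemma NT0 (m : nat) (F : edge_set m) : NT F set0 = #|PMs F|.
Proof. by apply: eq_card => M; rewrite inE sub0set andbT. Qed.

Lemma spread_nat (m : nat) (F : edge_set m) d (T : {set 'I_m * 'I_m}) :
  defic F setT setT d -> 16 * d <= m ->
  NT F T * m ^ #|T| <= 24 ^ #|T| * NT F set0.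
Proof.
move=> Dd h16; set t := #|T|.
case: (boolP (matchingb T)) => [HT|nT]; last first.
  suff -> : NT F T = 0 by [].
  apply/eqP; rewrite cards_eq0; apply/eqP/setP => M; rewrite !inE.
  apply/negbTE; apply/andP => -[/and4P[_ _ Hm _] TM]; case/negP: nT.
  by apply/matchingP => x y xT yT; apply: (matchingP _ Hm); apply: (subsetP TM).
case: (leqP (2 * t) m) => ht.
  apply: leq_trans (small_chain Dd h16 (erefl t) ht) _.
  by rewrite leq_mul2r expn_mono ?orbT.
set s := #|Sk F (cov1 T) (cov2 T) t|.
have Ls : t`! <= 4 ^ t * s.
  apply: (lowerL (d := d)); rewrite ?card_cov1 ?card_cov2 //; last by lia.
  exact: defic_sub Dd.
have LS := large_step F T; rewrite muln1 -/t -/s in LS.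
have Pf := pow_fact t.
have hn : m <= 2 * t by lia.
apply: leq_trans (_ : NT F T * (2 ^ t * (3 ^ t * (4 ^ t * s))) <= _).
  rewrite leq_mul2l; apply/orP; right.
  apply: leq_trans (expn_mono t hn) _; rewrite expnMn leq_mul2l; apply/orP; right.
  by apply: leq_trans Pf _; rewrite leq_mul2l Ls orbT.
have -> : NT F T * (2 ^ t * (3 ^ t * (4 ^ t * s))) = 24 ^ t * (NT F T * s).
  by have -> : 24 = 2 * 3 * 4 by []; rewrite !expnMn; ring.
by rewrite leq_mul2l LS orbT.
Qed.

Local Open Scope ring_scope.

Theorem corollary3p4 :
  exists (lambda0 C : R), 0 < lambda0 /\ 0 < C /\
  forall (lambda : R), 0 < lambda -> lambda <= lambda0 ->
  forall (I : nat) (F : edge_set I),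
    (forall u : 'I_I, (1 - lambda) * I%:R <= (deg0 F u)%:R) ->
    (forall w : 'I_I, (1 - lambda) * I%:R <= (deg1 F w)%:R) ->
    exists mu : {ffun edge_set I -> R},
      pm_distribution F mu /\ spread F mu (C * (I%:R)^-1).
Proof.
exists (16%:R^-1), 24%:R; split; first by rewrite invr_gt0 ltr0n.
split; first by rewrite ltr0n.
move=> lam lam0 lam16 n F H0 H1.
have key : forall k : nat, (1 - lam) * n%:R <= k%:R -> (15 * n <= 16 * k)%N.
  move=> k Hk; rewrite -(@ler_nat R) !natrM.
  apply: le_trans (_ : 16%:R * ((1 - lam) * n%:R) <= _); last first.
    by rewrite ler_pM2l ?ltr0n.
  rewrite mulrA; apply: ler_wpM2r; first exact: ler0n.
  have h : lam * 16%:R <= 1.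
    by rewrite -ler_pdivlMr ?ltr0n // mul1r.
  rewrite -[15%:R]/(15%:R : R) -[16%:R]/(16%:R : R); lra.
set d := (n %/ 16)%N.
have h16 : (16 * d <= n)%N by rewrite /d; lia.
have Dd : defic F setT setT d.
  apply: defic_of_deg => u; [have := key _ (H0 u) | have := key _ (H1 u)]; rewrite /d; lia.
have Npos : (0 < NT F set0)%N.
  have L : (n`! <= 4 ^ n * #|Sk F [set: 'I_n] [set: 'I_n] n|)%N.
    apply: (lowerL (d := d)); rewrite ?cardsT ?card_ord //; last by lia.
  rewrite NT0; have := leq_trans (fact_gt0 n) L; rewrite muln_gt0 => /andP[_ ->] //.
set N0 := NT F set0.
have N0R : 0 < (N0%:R : R) by rewrite ltr0n.
exists [ffun M => if M \in PMs F then (N0%:R)^-1 else 0].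
split.
- split; [|split].
  + move=> M; rewrite ffunE; apply/RleP; case: ifP => _; [by rewrite invr_ge0 ler0n | exact: lexx].
  + under eq_bigr do rewrite ffunE.
    rewrite -big_mkcond /= sumr_const -NT0 -/N0 -[LHS]mulr_natr mulVf //.
    by rewrite gt_eqF.
  + move=> M; rewrite ffunE; case: ifP => [HM _|_ []//]; exact: pm_of_PMs.
- move=> T TF.
  under eq_bigr do rewrite ffunE.
  rewrite -big_mkcondr /=.
  rewrite (eq_bigl (fun M => M \in [set M in PMs F | T \subset M])); last first.
    by move=> M; rewrite inE andbC.
  rewrite sumr_const -/(NT F T).
  have HN := spread_nat T Dd h16.
  apply/RleP; case: (posnP #|T|) => [t0|tpos].
    move/cards0_eq: (t0) => T0; rewrite T0 cards0 expr0 -/N0 -[X in (X <= _)]mulr_natr mulVf //.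
    by rewrite gt_eqF.
  have npos : (0 < n)%N.
    by have /card_gt0P[e _] := tpos; exact: (leq_ltn_trans (leq0n _) (ltn_ord e.1)).
  have nR : 0 < (n%:R ^+ #|T| : R) by rewrite exprn_gt0 // ltr0n.
  rewrite -[X in (X <= _)]mulr_natr exprMn exprVn mulrC ler_pdivrMr // mulrAC ler_pdivlMr //.
  by rewrite -!natrX -!natrM ler_nat.
Qed.
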